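(* Let $R$ be a ring satisfying condition (C): every subring of $Q=Q_{\max}^r(R)$ containing $R$ is flat as a left $R$-module. Let $Q_\alpha$ be the rings of the construction described in the context and $Q^{(\alpha)}$ the rings of Morita's construction starting from $Q$. Then $Q_\alpha=Q^{(\alpha)}$ for every ordinal $\alpha$.
   Context: Rings are associative with unit; modules are right modules. For a hereditary torsion theory with Gabriel filter $\mathcal{E}$ (set of right ideals $I$ with $R/I$ torsion), $R_{\mathcal{E}}=\varinjlim_{I\in\mathcal{E}}\mathrm{Hom}_R(I,R/\mathcal{T}R)$ is its right ring of quotients; for faithful torsion theories it is a subring of $Q_{\max}^r(R)$. For $S\supseteq R$ flat as a left $R$-module, $\tau_S$ is the hereditary torsion theory whose torsion modules are those $M$ with $M\otimes_R S=0$. Construction of $Q_\alpha$: $Q_0=Q_{\max}^r(R)$ (ring of quotients of the Lambek torsion theory, whose filter $\mathcal{E}_0$ is the set of dense right ideals). $\mathcal{E}_{\alpha+1}$ is the Gabriel filter of $\tau_{Q_\alpha}$, namely $\{I: IQ_\alpha=Q_\alpha\}$, and $Q_{\alpha+1}=R_{\mathcal{E}_{\alpha+1}}$. For a limit ordinal $\alpha$, $\mathcal{E}_\alpha=\bigcap_{\beta<\alpha}\mathcal{E}_\beta$ and $Q_\alpha=R_{\mathcal{E}_\alpha}=\bigcap_{\beta<\alpha}Q_\beta$. Morita's construction: for a ring extension $S$ of $R$ and $x\in S$, let $(R:x)=\{r\in R: xr\in R\}$, and $S'=\{s\in S: (R:sr)S=S\text{ for every } r\in R\}$ (a subring of $S$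 containing $R$). Set $Q^{(0)}=Q$, $Q^{(\alpha+1)}=(Q^{(\alpha)})'$, and $Q^{(\alpha)}=\bigcap_{\beta<\alpha}Q^{(\beta)}$ for limit ordinals $\alpha$. *)

(* Defs.v *)
(* Q is an abstract ring (the maximal right ring of quotients),
   R is a subring of Q given as a (Prop-valued) subset.  Right modules throughout. *)
From mathcomp Require Import all_boot all_algebra.
Set Implicit Arguments. Unset Strict Implicit. Unset Printing Implicit Defensive.
Import GRing.Theory.
Local Open Scope ring_scope.

Section RingDefs.
Variable Q : pzRingType.

Definition seteq (A B : Q -> Prop) : Prop := forall x, A x <-> B x.

Definition is_subring (S : Q -> Prop) : Prop :=
  [/\ S 0, S 1, (forall x y, S x -> S y -> S (x - y)) &
      (forall x y, S x -> S y -> S (x * y))].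

Definition is_right_ideal (R I : Q -> Prop) : Prop :=
  [/\ (forall x, I x -> R x), I 0, (forall x y, I x -> I y -> I (x - y)) &
      (forall x r, I x -> R r -> I (x * r))].

(* dense right ideals of R (the Gabriel filter E_0 of the Lambek torsion theory) *)
Definition dense_right_ideal (R D : Q -> Prop) : Prop :=
  is_right_ideal R D /\
  forall r1 r2, R r1 -> R r2 -> r1 <> 0 ->
    exists r, [/\ R r, r1 * r <> 0 & D (r2 * r)].

Definition colon (R : Q -> Prop) (x : Q) : Q -> Prop :=
  fun r => R r /\ R (x * r).

Definition right_R_hom (R D : Q -> Prop) (f : Q -> Q) : Prop :=
  [/\ (forall d, D d -> R (f d)),
      (forall d d', D d -> D d' -> f (d + d') = f d + f d') &
      (forall d r, D d -> R r -> f (d * r) = f d * r)].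

(* Q = Q_max^r(R) = lim_{D dense} Hom_R(D, R), the identification being
   q |-> (left multiplication by q on the dense right ideal (R:q)):
   every q is defined on a dense ideal, it is determined by its values on any
   dense ideal, and every homomorphism from a dense ideal to R is realised. *)
Definition is_Qmax (R : Q -> Prop) : Prop :=
  [/\ is_subring R,
      (forall q, dense_right_ideal R (colon R q)),
      (forall q D, dense_right_ideal R D -> (forall d, D d -> q * d = 0) -> q = 0) &
      (forall D f, dense_right_ideal R D -> right_R_hom R D f ->
         exists q, forall d, D d -> q * d = f d)].

Definition prodset (I S : Q -> Prop) : Q -> Prop :=
  fun x => exists n (i s : 'I_n -> Q),
    [/\ (forall k, I (i k)), (forall k, S (s k)) & x = \sum_(k < n) i k * s k].

(* S (a subring of Q containing R, a left R-module by multiplication) is flat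
   as a left R-module -- stated by the equational criterion for flatness. *)
Definition flat_left (R S : Q -> Prop) : Prop :=
  forall n (r s : 'I_n -> Q), (forall k, R (r k)) -> (forall k, S (s k)) ->
    \sum_(k < n) r k * s k = 0 ->
    exists m (a : 'I_n -> 'I_m -> Q) (t : 'I_m -> Q),
      [/\ (forall i j, R (a i j)), (forall j, S (t j)),
          (forall i, s i = \sum_(j < m) a i j * t j) &
          (forall j, \sum_(i < n) r i * a i j = 0)].

Definition condC (R : Q -> Prop) : Prop :=
  forall S, is_subring S -> (forall x, R x -> S x) -> flat_left R S.

(* Gabriel filter of tau_S : { I right ideal | I S = S } *)
Definition tau_filter (R S : Q -> Prop) : (Q -> Prop) -> Prop :=
  fun I => is_right_ideal R I /\ seteq (prodset I S) S.

(* R_E, for a faithful Gabriel filter E, as a subring of Q_max: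
   image of lim_{I in E} Hom_R(I, R) in Q *)
Definition ring_of_quotients (R : Q -> Prop) (E : (Q -> Prop) -> Prop) : Q -> Prop :=
  fun q => exists I, E I /\ forall i, I i -> R (q * i).

Definition morita_prime (R S : Q -> Prop) : Q -> Prop :=
  fun s => S s /\ forall r, R r -> seteq (prodset (colon R (s * r)) S) S.

End RingDefs.

(* Ordinals: indices range over an arbitrary well-ordered type (O, lt). *)
Section Ordinals.
Variables (O : Type) (lt : O -> O -> Prop).

Definition is_wellorder : Prop :=
  [/\ (forall a, ~ lt a a), (forall a b c, lt a b -> lt b c -> lt a c),
      (forall a b, [\/ lt a b, a = b | lt b a]) & well_founded lt].

Definition is_zero (a : O) : Prop := forall b, ~ lt b a.
Definition is_succ_of (b a : O) : Prop :=
  lt b a /\ forall c, lt c a -> c = b \/ lt c b.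
Definition is_limit (a : O) : Prop := ~ is_zero a /\ forall b, ~ is_succ_of b a.

End Ordinals.

Section Families.
Variables (Q : pzRingType) (R : Q -> Prop) (O : Type) (lt : O -> O -> Prop).

Definition Qalpha_family (E : O -> (Q -> Prop) -> Prop) (Qa : O -> Q -> Prop) : Prop :=
  [/\ (forall a, is_zero lt a ->
         (forall I, E a I <-> dense_right_ideal R I) /\
         seteq (Qa a) (ring_of_quotients R (E a))),
      (forall a b, is_succ_of lt b a ->
         (forall I, E a I <-> tau_filter R (Qa b) I) /\
         seteq (Qa a) (ring_of_quotients R (E a))) &
      (forall a, is_limit lt a ->
         (forall I, E a I <-> forall b, lt b a -> E b I) /\
         seteq (Qa a) (ring_of_quotients R (E a)))].

Definition Morita_family (Qm : O -> Q -> Prop) : Prop :=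
  [/\ (forall a, is_zero lt a -> forall x, Qm a x),
      (forall a b, is_succ_of lt b a -> seteq (Qm a) (morita_prime R (Qm b))) &
      (forall a, is_limit lt a -> forall x, Qm a x <-> forall b, lt b a -> Qm b x)].

End Families.

(* Main.v *)
Require Import Defs.
From mathcomp Require Import all_boot all_algebra.
From Stdlib Require Import Classical.
Set Implicit Arguments. Unset Strict Implicit. Unset Printing Implicit Defensive.
Import GRing.Theory.
Local Open Scope ring_scope.

Section Aux.
Variable Q : pzRingType.
Implicit Types (R S I J : Q -> Prop).

Lemma sub_add S x y : is_subring S -> S x -> S y -> S (x + y).
Proof.
case=> S0 S1 SB SM Sx Sy. have := SB x (0 - y) Sx (SB 0 y S0 Sy).
by rewrite sub0r opprK.
Qed.

Lemma sub_sum S n (F : 'I_n -> Q) : is_subring S -> (forall k, S (F k)) ->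
  S (\sum_(k < n) F k).
Proof.
move=> HS HF; apply: (big_ind S); [by case: HS | move=> x y; exact: sub_add | by []].
Qed.

Lemma ideal_add R I x y : is_right_ideal R I -> I x -> I y -> I (x + y).
Proof.
case=> _ I0 IB _ Ix Iy. have := IB x (0 - y) Ix (IB 0 y I0 Iy).
by rewrite sub0r opprK.
Qed.

Lemma ideal_sum R I n (F : 'I_n -> Q) : is_right_ideal R I -> (forall k, I (F k)) ->
  I (\sum_(k < n) F k).
Proof.
move=> HI HF; apply: (big_ind I); [by case: HI => _ ? _ _ | move=> x y; exact: (ideal_add HI) | by []].
Qed.

Lemma prodset0 I S : prodset I S 0.
Proof.
exists 0%N, (fun _ => 0), (fun _ => 0); split; first (by move=> [k]; rewrite ltn0);
  first (by move=> [k]; rewrite ltn0). by rewrite big_ord0.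
Qed.

Lemma prodset_mul I S i s : I i -> S s -> prodset I S (i * s).
Proof.
move=> Ii Ss; exists 1%N, (fun _ => i), (fun _ => s); split => //.
by rewrite big_ord1.
Qed.

Lemma prodsetD I S x y : prodset I S x -> prodset I S y -> prodset I S (x + y).
Proof.
move=> [n [i [s [Hi Hs ->]]]] [m [j [t [Hj Ht ->]]]].
exists (n + m)%N, (fun k => match split k with inl a => i a | inr b => j b end),
  (fun k => match split k with inl a => s a | inr b => t b end).
split.
- by move=> k; case: (split k).
- by move=> k; case: (split k).
- rewrite big_split_ord /=. congr (_ + _); apply: eq_bigr => k _.
  + by have /= -> := unsplitK (inl k : 'I_n + 'I_m).
  + by have /= -> := unsplitK (inr k : 'I_n + 'I_m).
Qed.

Lemma prodset_sum I S n (F : 'I_n -> Q) : (forall k, prodset I S (F k)) ->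
  prodset I S (\sum_(k < n) F k).
Proof.
move=> HF; apply: (big_ind (prodset I S)); [exact: prodset0 | move=> x y; exact: prodsetD | by []].
Qed.

Lemma prodset_mono I I' S S' x : (forall y, I y -> I' y) -> (forall y, S y -> S' y) ->
  prodset I S x -> prodset I' S' x.
Proof.
move=> h1 h2 [n [i [s [Hi Hs ->]]]]; exists n, i, s; split => // k; auto.
Qed.

Lemma prodset_sub I S x : (forall y, I y -> S y) -> is_subring S -> prodset I S x -> S x.
Proof.
move=> IS HS [n [i [s [Hi Hs ->]]]]; apply: sub_sum => // k.
case: HS => _ _ _ SM; apply: SM; auto.
Qed.

Lemma prodset_all I S s0 : is_subring S -> prodset I S 1 -> S s0 -> prodset I S s0.
Proof.
move=> HS [n [i [s [Hi Hs E]]]] Ss0.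
exists n, i, (fun k => s k * s0); split => //.
- move=> k; case: HS => _ _ _ SM; exact: SM.
- transitivity (1 * s0); first by rewrite mul1r.
  rewrite E mulr_suml; apply: eq_bigr => k _; by rewrite mulrA.
Qed.

Lemma colon_ideal R q : is_subring R -> is_right_ideal R (colon R q).
Proof.
case=> R0 R1 RB RM; split.
- by move=> x [].
- by split; rewrite ?mulr0.
- move=> x y [? ?] [? ?]; split; [exact: RB | rewrite mulrBr; exact: RB].
- move=> x r [? ?] ?; split; [exact: RM | rewrite mulrA; exact: RM].
Qed.

Definition cl R I r : Q -> Prop := fun x => R x /\ I (r * x).

Lemma cl_ideal R I r : is_subring R -> is_right_ideal R I -> is_right_ideal R (cl R I r).
Proof.
case=> R0 R1 RB RM [IR I0 IB IM]; split.
- by move=> x [].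
- by split; rewrite ?mulr0.
- move=> x y [? ?] [? ?]; split; [exact: RB | rewrite mulrBr; exact: IB].
- move=> x t [? ?] ?; split; [exact: RM | rewrite mulrA; exact: IM].
Qed.

Section Good.
Variables (R S : Q -> Prop) (HR : is_subring R) (HS : is_subring S)
  (RS : forall x, R x -> S x) (flat : flat_left R S).

Definition good I := is_right_ideal R I /\ prodset I S 1.

Lemma good_mono I J : good I -> is_right_ideal R J -> (forall x, I x -> J x) -> good J.
Proof.
move=> [_ p] rJ sub; split => //; apply: prodset_mono p => //.
Qed.

Lemma good_cl I r : good I -> R r -> good (cl R I r).
Proof.
move=> [rI p1] Rr; split; first exact: cl_ideal.
have [IR I0 IB IM] := rI.
have [R0 R1 RB RM] := HR.
have RN : forall x, R x -> R (- x) by move=> x Rx; rewrite -sub0r; exact: RB.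
have [n [i [s [Hi Hs Er]]]] := prodset_all HS p1 (RS Rr).
pose rr (k : 'I_n.+1) := if unlift ord0 k is Some k' then - i k' else r.
pose ss (k : 'I_n.+1) := if unlift ord0 k is Some k' then s k' else 1.
have r0 : rr ord0 = r by rewrite /rr unlift_none.
have s0 : ss ord0 = 1 by rewrite /ss unlift_none.
have rl : forall k, rr (lift ord0 k) = - i k by move=> k; rewrite /rr liftK.
have sl : forall k, ss (lift ord0 k) = s k by move=> k; rewrite /ss liftK.
have [m [a [t [Ha Ht Es Ez]]]] : exists m (a : 'I_n.+1 -> 'I_m -> Q) (t : 'I_m -> Q),
      [/\ (forall i j, R (a i j)), (forall j, S (t j)),
          (forall i, ss i = \sum_(j < m) a i j * t j) &
          (forall j, \sum_(i < n.+1) rr i * a i j = 0)].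
  apply: flat.
  - move=> k; rewrite /rr; case: (unlift ord0 k) => [k'|] //; apply: RN; exact: IR.
  - move=> k; rewrite /ss; case: (unlift ord0 k) => [k'|] //; by case: HS.
  - rewrite big_ord_recl r0 s0 mulr1.
    rewrite (eq_bigr (fun k => - (i k * s k))); last by move=> k _; rewrite rl sl mulNr.
    by rewrite sumrN -Er subrr.
exists m, (a ord0), t; split => //.
- move=> j; split => //.
  have h := Ez j; rewrite big_ord_recl r0 in h.
  have e : \sum_(k < n) rr (lift ord0 k) * a (lift ord0 k) j =
           - \sum_(k < n) i k * a (lift ord0 k) j.
    by rewrite -sumrN; apply: eq_bigr => k _; rewrite rl mulNr.
  rewrite e in h; move/eqP: h; rewrite subr_eq0 => /eqP ->.
  apply: (ideal_sum rI) => k; apply: IM => //.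
- by rewrite -s0 Es.
Qed.

Lemma good_trans I J : good I -> is_right_ideal R J ->
  (forall x, I x -> good (cl R J x)) -> good J.
Proof.
move=> [rI [n [x [s [Hx Hs E]]]]] rJ h; split => //.
rewrite E; apply: prodset_sum => k.
have [_ p] := h _ (Hx k).
have [m [y [u [Hy Hu ->]]]] := prodset_all HS p (Hs k).
rewrite mulr_sumr; apply: prodset_sum => l; rewrite mulrA; apply: prodset_mul => //.
by case: (Hy l).
Qed.

Definition T : Q -> Prop := fun q => exists I, good I /\ forall i, I i -> R (q * i).

Lemma good_R : good R.
Proof.
have [R0 R1 RB RM] := HR.
split; first by split; [by [] | by [] | exact: RB | exact: RM].
rewrite -(mulr1 1); apply: prodset_mul => //; by case: HS.
Qed.

Lemma good_cap I1 I2 : good I1 -> good I2 -> good (fun x => I1 x /\ I2 x).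
Proof.
move=> g1 g2.
have [[IR1 I01 IB1 IM1] _] := g1. have [[IR2 I02 IB2 IM2] _] := g2.
have rJ : is_right_ideal R (fun x => I1 x /\ I2 x).
  split; [by move=> x [] /IR1 | by [] | move=> x y [? ?] [? ?]; split; auto |
          move=> x r [? ?] ?; split; auto].
apply: (good_trans g1 rJ) => x I1x.
apply: (good_mono (good_cl g2 (IR1 _ I1x))); first exact: cl_ideal.
move=> y [Ry I2y]; split => //; split => //; exact: IM1.
Qed.

Lemma T_subring : is_subring T /\ (forall x, R x -> T x).
Proof.
have [R0 R1 RB RM] := HR.
have TR : forall x, R x -> T x.
  move=> x Rx; exists R; split; first exact: good_R.
  by move=> i Ri; apply: RM.
split => //; split; [exact: TR | exact: TR | |].
- move=> q1 q2 [I1 [g1 h1]] [I2 [g2 h2]].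
  exists (fun x => I1 x /\ I2 x); split; first exact: good_cap.
  by move=> i [i1 i2]; rewrite mulrBl; apply: RB; auto.
- move=> q1 q2 [I1 [g1 h1]] [I2 [g2 h2]].
  have [[IR1 I01 IB1 IM1] _] := g1. have [[IR2 I02 IB2 IM2] _] := g2.
  exists (fun x => I2 x /\ I1 (q2 * x)); split; last first.
    by move=> i [_ ?]; rewrite -mulrA; auto.
  have rJ : is_right_ideal R (fun x => I2 x /\ I1 (q2 * x)).
    split; [by move=> x [] /IR2 | by rewrite mulr0 | 
      move=> x y [? ?] [? ?]; split; auto; rewrite mulrBr; auto |
      move=> x r [? ?] ?; split; auto; rewrite mulrA; auto].
  apply: (good_trans g2 rJ) => x I2x.
  apply: (good_mono (good_cl g1 (h2 _ I2x))); first exact: cl_ideal.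
  move=> y [Ry I1y]; split => //; split; first exact: IM2.
  by rewrite mulrA.
Qed.

Lemma T_morita q : T q <-> morita_prime R S q.
Proof.
have [R0 R1 RB RM] := HR.
split.
- move=> [I [[rI [n [i [s [Hi Hs E]]]]] hq]].
  have [IR _ _ IM] := rI.
  have Sq : S q.
    rewrite -[q]mulr1 E mulr_sumr; apply: sub_sum => // k; rewrite mulrA.
    case: HS => _ _ _ SM; apply: SM; auto.
  split => // r Rr x; split.
  + apply: prodset_sub => //; move=> y [Ry _]; auto.
  + move=> Sx; apply: prodset_all => //.
    have g : good I by split => //; exists n, i, s.
    have sub : forall y, cl R I r y -> colon R (q * r) y.
      by move=> y [Ry Iy]; split => //; rewrite -mulrA; exact: hq _ Iy.
    have [_ p] := good_mono (good_cl g Rr) (colon_ideal (q * r) HR) sub.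
    exact: p.
- move=> [Sq h]; exists (colon R q); split; last by move=> i [].
  split; first exact: colon_ideal.
  have := (h 1 R1 1).2; rewrite mulr1; apply; by case: HS.
Qed.

Lemma tau_good S' I : seteq S' S -> (tau_filter R S' I <-> good I).
Proof.
move=> e; split.
- move=> [rI eI]; split => //.
  apply: prodset_mono (fun y h => h) (fun y h => proj1 (e y) h) _.
  apply/(eI 1)/(e 1); by case: HS.
- move=> [rI p]; split => // x; split.
  + move=> px; apply/e; apply: (prodset_sub (I := I)) => //.
    * move=> y Iy; apply: RS; by case: rI => + _ _ _; apply.
    * exact: prodset_mono (fun y h => h) (fun y h => proj1 (e y) h) px.
  + move=> /e Sx; apply: prodset_mono (fun y h => h) (fun y h => proj2 (e y) h) _.
    exact: prodset_all.
Qed.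

End Good.

Lemma subring_seteq S S' : seteq S S' -> is_subring S' -> is_subring S.
Proof.
move=> e [S0 S1 SB SM]; split; [exact/e|exact/e|move=> x y /e ? /e ?; apply/e; auto|
  move=> x y /e ? /e ?; apply/e; auto].
Qed.

End Aux.

Theorem proposition3p3 (Q : pzRingType) (R : Q -> Prop) :
  is_Qmax R -> condC R ->
  forall (O : Type) (lt : O -> O -> Prop), is_wellorder lt ->
  forall (E : O -> (Q -> Prop) -> Prop) (Qa Qm : O -> Q -> Prop),
    Qalpha_family R lt E Qa -> Morita_family R lt Qm ->
    forall a : O, seteq (Qa a) (Qm a).
Proof.
move=> [HR Hcol _ _] HC O lt [_ _ _ wf] E Qa Qm [FZ FS FL] [MZ MS ML].
have tri : forall a, [\/ is_zero lt a, (exists b, is_succ_of lt b a) | is_limit lt a].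
  move=> a. case: (classic (is_zero lt a)) => [?|nz]; first by constructor 1.
  case: (classic (exists b, is_succ_of lt b a)) => [?|ns]; first by constructor 2.
  constructor 3; split => // b hb; apply: ns; by exists b.
have exlt : forall a, is_limit lt a -> exists b, lt b a.
  move=> a [nz _]; apply: NNPP => h; apply: nz => b hb; apply: h; by exists b.
have QaE : forall a, seteq (Qa a) (ring_of_quotients R (E a)).
  move=> a; case: (tri a) => [z|[b s]|l];
    [exact: (FZ a z).2 | exact: (FS a b s).2 | exact: (FL a l).2].
suff P : forall a, [/\ (forall I, E a I -> is_right_ideal R I),
   (forall I J, E a I -> is_right_ideal R J -> (forall x, I x -> J x) -> E a J),
   is_subring (Qm a) /\ (forall x, R x -> Qm a x) & seteq (Qa a) (Qm a)].
  by move=> a; case: (P a).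
elim/(well_founded_induction wf) => a IH.
case: (tri a) => [z|[b s]|l].
- have [EZ _] := FZ a z.
  split.
  + by move=> I /EZ [].
  + move=> I J /EZ [_ dI] rJ sub; apply/EZ; split=> // r1 r2 h1 h2 h3.
    have [r [? ? ?]] := dI r1 r2 h1 h2 h3. by exists r; split=> //; apply: sub.
  + split; last by move=> x _; exact: MZ.
    split; [exact: MZ|exact: MZ|move=> *; exact: MZ|move=> *; exact: MZ].
  + move=> x; split=> _; first exact: MZ.
    apply/QaE; exists (colon R x); split; first by apply/EZ; exact: Hcol.
    by move=> i [].
- have [IHi IHm [SS RS] IHe] := IH b s.1.
  have [ES _] := FS a b s.
  have flat := HC (Qm b) SS RS.
  have Eg : forall I, E a I <-> good R (Qm b) I.
    move=> I; apply: iff_trans (ES I) _; exact: tau_good.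
  have QT : seteq (Qa a) (T R (Qm b)).
    move=> x; apply: iff_trans (QaE a x) _; split.
    + by move=> [I [/Eg g h]]; exists I.
    + by move=> [I [/Eg g h]]; exists I.
  have MT : seteq (Qm a) (T R (Qm b)).
    move=> x; apply: iff_trans (MS a b s x) _; apply: iff_sym; exact: T_morita.
  have [Tsub TR] := T_subring HR SS RS flat.
  split.
  + by move=> I /Eg [].
  + move=> I J /Eg g rJ sub; apply/Eg; exact: good_mono g rJ sub.
  + split; first exact: subring_seteq MT Tsub.
    by move=> x /TR /MT.
  + move=> x; apply: iff_trans (QT x) _; exact: iff_sym (MT x).
- have [EL _] := FL a l.
  have ML' := ML a l.
  split.
  + move=> I /EL h; have [b hb] := exlt a l; have [h1 _ _ _] := IH b hb; exact: h1 (h b hb).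
  + move=> I J /EL h rJ sub; apply/EL => b hb; have [_ h2 _ _] := IH b hb.
    exact: h2 (h b hb) rJ sub.
  + split; last by move=> x Rx; apply/ML' => b hb; have [_ _ [_ h] _] := IH b hb; auto.
    split.
    * by apply/ML' => b hb; have [_ _ [[? ? ? ?] _] _] := IH b hb.
    * by apply/ML' => b hb; have [_ _ [[? ? ? ?] _] _] := IH b hb.
    * move=> x y /ML' hx /ML' hy; apply/ML' => b hb.
      have [_ _ [[? ? SB ?] _] _] := IH b hb; auto.
    * move=> x y /ML' hx /ML' hy; apply/ML' => b hb.
      have [_ _ [[? ? ? SM] _] _] := IH b hb; auto.
  + move=> x; split.
    * move/QaE => [I [EI HI]]; apply/ML' => b hb; have [_ _ _ eb] := IH b hb.
      apply/eb/QaE; exists I; split => //; exact: (proj1 (EL I) EI b hb).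
    * move/ML' => h; apply/QaE; exists (colon R x); split; last by move=> i [].
      apply/EL => b hb. have [ib mb _ eb] := IH b hb.
      have [I [EI HI]] := proj1 (QaE b x) (proj2 (eb x) (h b hb)).
      apply: (mb I (colon R x) EI (colon_ideal x HR)) => y hy.
      split; last exact: HI.
      by have [IR _ _ _] := ib I EI; apply: IR.
Qed.
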